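(* Let $T=(F_0,F_1)$ be a template of order $10$ and type $(4,4,4,4)$, and let $N$ be a $4$-net of order $10$ that is a refinement of $T$. Then: (i) the four points of $T$ of weight $4$ (type $1111$) lie in pairwise distinct rows and pairwise distinct columns; (ii) each row of $Q_2$ and each column of $Q_3$ contains exactly three cells of type ${*}{*}10$ and three cells of type ${*}{*}01$; (iii) each relational line of $N$ in $\Pi_2\cup\Pi_3$ contains exactly one point of $Q_1$ and exactly three points in each of $Q_2$, $Q_3$ and $Q_4$; (iv) each column of $Q_2$ and each row of $Q_3$ contains exactly two cells of type ${*}{*}01$ and two of type ${*}{*}10$; and each row and each column of $Q_4$ contains exactly two cells of type $0011$ and four cells of type $0000$. Here ${*}$ denotes an arbitrary bit.
   Context: A $k$-net of order $n$: a set of $n^2$ points and $kn$ lines (subsets of size $n$), each point on $k$ lines, lines partitioned into $k$ parallel classes $\Pi_0,\dots,\Pi_{k-1}$ of $n$ pairwise disjoint lines, lines from different classes meeting in exactly one point. A binary frequency square of order $n$ with frequencies $(n-\lambda,\lambda)$ is an $n\times n$ array over $\{0,1\}$ with exactly $\lambda$ ones in each row and each column; two such squares with frequencies $(n-\lambda,\lambda)$, $(n-\mu,\mu)$ are orthogonal if each pair $(a,b)\in\{0,1\}^2$ occurs in exactly $f_a f'_b$ cells, where $f_0=n-\lambda,f_1=\lambda,f'_0=n-\mu,f'_1=\mu$. For $n$ even and even $\lambda_0,\dots,\lambda_{k-1}$, a template of order $n$ and type $(\lambda_0,\dots,\lambda_{k-1})$ is a list $(F_0,\dots,F_{k-3})$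 of mutually orthogonal binary frequency squares of order $n$, $F_{t-2}$ having frequencies $(n-\lambda_t,\lambda_t)$, where rows $0,\dots,\lambda_0-1$ and columns $0,\dots,\lambda_1-1$ are called relational; the type of cell $(i,j)$ is the string $(x,y,F_0[i,j],\dots,F_{k-3}[i,j])$ with $x=1$ iff row $i$ is relational and $y=1$ iff column $j$ is relational; its weight is the number of ones in its type, and it is required that every cell has weight $\equiv\frac12\sum_i\lambda_i\pmod 2$. A $k$-net $N$ with parallel classes $\Pi_0,\dots,\Pi_{k-1}$ is a refinement of $T$ if the lines of $\Pi_0$ and $\Pi_1$ can be labelled $0,\dots,n-1$ (rows and columns) so that, identifying each point with the cell (row label, column label), for each $t\ge2$ every line of $\Pi_t$ consists of cells on which $F_{t-2}$ is constant; a line of $\Pi_t$ ($t\ge 2$) is relational if $F_{t-2}$ equals $1$ on it, and relational rows/columns are the lines of $\Pi_0,\Pi_1$ labelled by relational rows/columns. For order $10$ and type $(4,4,4,4)$ the quadrants are: $Q_1$ = rows $0$–$3$ × columns $0$–$3$; $Q_2$ = rows $0$–$3$ × columns $4$–$9$; $Q_3$ = rows $4$–$9$ × columns $0$–$3$; $Q_4$ = rows $4$–$9$ × columns $4$–$9$. A ''row of $Q_2$'' means the 6 cells of one relational row in $Q_2$, a ''column of $Q_2$'' the 4 cells of one non-relational column in $Q_2$, and similarly for the other quadrants. *)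

(* Defs.v *)
From mathcomp Require Import all_boot fingroup perm.
Set Implicit Arguments. Unset Strict Implicit. Unset Printing Implicit Defensive.

(* cells of an n x n array: (row, column) *)
Definition cell n := ('I_n * 'I_n)%type.

Definition freq_square n (lam : nat) (F : 'I_n -> 'I_n -> bool) : Prop :=
  (forall i, #|[set j | F i j]| = lam) /\ (forall j, #|[set i | F i j]| = lam).

Definition freq n (lam : nat) (a : bool) : nat := if a then lam else n - lam.

Definition orthogonal_fs n (lam mu : nat) (F G : 'I_n -> 'I_n -> bool) : Prop :=
  forall a b : bool,
    #|[set c : cell n | (F c.1 c.2 == a) && (G c.1 c.2 == b)]| = freq n lam a * freq n mu b.

Definition ctype n (l0 l1 : nat) (F0 F1 : 'I_n -> 'I_n -> bool) (c : cell n)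
  : bool * bool * bool * bool := (c.1 < l0, c.2 < l1, F0 c.1 c.2, F1 c.1 c.2).

Definition weight n l0 l1 F0 F1 (c : cell n) : nat :=
  let: (x, y, a, b) := ctype l0 l1 F0 F1 c in (x : nat) + y + a + b.

Definition template4 n (l0 l1 l2 l3 : nat) (F0 F1 : 'I_n -> 'I_n -> bool) : Prop :=
  [/\ ~~ odd n, ~~ odd l0, ~~ odd l1, ~~ odd l2 & ~~ odd l3] /\
  freq_square l2 F0 /\ freq_square l3 F1 /\ orthogonal_fs l2 l3 F0 F1 /\
  (forall c : cell n, odd (weight l0 l1 F0 F1 c) = odd ((l0 + l1 + l2 + l3)./2)).

(* a k-net of order n on the point set P: lines t i is the i-th line of the
   parallel class Pi_t *)
Definition is_net (P : finType) n k (lines : 'I_k -> 'I_n -> {set P}) : Prop :=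
  [/\ #|P| = n ^ 2,
      (forall t i, #|lines t i| = n),
      (forall p : P, #|[set ti : 'I_k * 'I_n | p \in lines ti.1 ti.2]| = k),
      (forall t i j, i != j -> [disjoint lines t i & lines t j]) &
      (forall t t' i j, t != t' -> #|lines t i :&: lines t' j| = 1)].

Definition cls (t : nat) : 'I_4 := inord t.

(* labels of the Pi_0 line (row) and Pi_1 line (column) through p, under the
   labellings s0, s1 of the lines of Pi_0, Pi_1 *)
Definition row_of (P : finType) n (lines : 'I_4 -> 'I_n.+1 -> {set P})
  (s0 : {perm 'I_n.+1}) (p : P) : 'I_n.+1 :=
  s0 (odflt ord0 [pick i | p \in lines (cls 0) i]).
Definition col_of (P : finType) n (lines : 'I_4 -> 'I_n.+1 -> {set P})
  (s1 : {perm 'I_n.+1}) (p : P) : 'I_n.+1 :=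
  s1 (odflt ord0 [pick i | p \in lines (cls 1) i]).
Definition cell_of (P : finType) n (lines : 'I_4 -> 'I_n.+1 -> {set P})
  (s0 s1 : {perm 'I_n.+1}) (p : P) : cell n.+1 :=
  (row_of lines s0 p, col_of lines s1 p).

(* the square F_{t-2} associated with class t = 2, 3 *)
Definition sq n (F0 F1 : 'I_n -> 'I_n -> bool) (t : nat) := if t == 2 then F0 else F1.

Definition refines (P : finType) n (lines : 'I_4 -> 'I_n.+1 -> {set P})
  (F0 F1 : 'I_n.+1 -> 'I_n.+1 -> bool) (s0 s1 : {perm 'I_n.+1}) : Prop :=
  forall t, t \in [:: 2; 3] -> forall j p q,
    p \in lines (cls t) j -> q \in lines (cls t) j ->
    let cp := cell_of lines s0 s1 p in let cq := cell_of lines s0 s1 q in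
    sq F0 F1 t cp.1 cp.2 = sq F0 F1 t cq.1 cq.2.

Definition relational_line (P : finType) n (lines : 'I_4 -> 'I_n.+1 -> {set P})
  (F0 F1 : 'I_n.+1 -> 'I_n.+1 -> bool) (s0 s1 : {perm 'I_n.+1}) (t : nat) j : Prop :=
  forall p, p \in lines (cls t) j ->
    let c := cell_of lines s0 s1 p in sq F0 F1 t c.1 c.2 = true.

Definition Q1 (c : cell 10) : bool := (c.1 < 4) && (c.2 < 4).
Definition Q2 (c : cell 10) : bool := (c.1 < 4) && (4 <= c.2).
Definition Q3 (c : cell 10) : bool := (4 <= c.1) && (c.2 < 4).
Definition Q4 (c : cell 10) : bool := (4 <= c.1) && (4 <= c.2).

(* Main.v *)
Require Import Defs.
From mathcomp Require Import all_boot fingroup perm.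
From mathcomp Require Import zify.

Lemma cardS (T : finType) (p : pred T) : #|[set x | p x]| = \sum_x (p x : nat).
Proof. rewrite -sum1_card big_mkcond /=; apply: eq_bigr => x _; rewrite inE; by case: (p x). Qed.

Lemma cardSin (T : finType) (A : {set T}) (p : pred T) :
  #|[set x in A | p x]| = \sum_(x in A) (p x : nat).
Proof.
rewrite -sum1_card big_mkcond [RHS]big_mkcond /=; apply: eq_bigr => x _.
rewrite !inE; by case: (x \in A); case: (p x).
Qed.

Lemma sum_split (T : finType) (A : {pred T}) (f g h : T -> nat) :
  (forall x, x \in A -> f x = g x + h x) ->
  \sum_(x in A) f x = \sum_(x in A) g x + \sum_(x in A) h x.
Proof. move=> H; rewrite -big_split; exact: eq_bigr. Qed.

Lemma sum_splitT (T : finType) (f g h : T -> nat) :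
  (forall x, f x = g x + h x) ->
  \sum_x f x = \sum_x g x + \sum_x h x.
Proof. move=> H; rewrite -big_split; exact: eq_bigr. Qed.

Lemma sum_ge4 : \sum_(j : 'I_10) (4 <= j : nat) = 6.
Proof. by rewrite !big_ord_recr big_ord0. Qed.
Lemma sum_lt4 : \sum_(j : 'I_10) (j < 4 : nat) = 4.
Proof. by rewrite !big_ord_recr big_ord0. Qed.

Section Rows.
Variables F0 F1 : 'I_10 -> 'I_10 -> bool.
Hypothesis H0 : forall i, #|[set j | F0 i j]| = 4.
Hypothesis H1 : forall i, #|[set j | F1 i j]| = 4.
Hypothesis Hp : forall i j : 'I_10, ~~ odd ((i < 4) + (j < 4) + F0 i j + F1 i j).

Lemma rowR (i : 'I_10) : i < 4 ->
 [/\ #|[set j : 'I_10 | (j < 4) && (F0 i j && F1 i j)]| = 1,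
     #|[set j : 'I_10 | (4 <= j) && (F0 i j && ~~ F1 i j)]| = 3 &
     #|[set j : 'I_10 | (4 <= j) && (~~ F0 i j && F1 i j)]| = 3].
Proof.
move=> Hi.
have e0 := @sum_splitT _ (fun j => F0 i j : nat) (fun j => (j < 4) && (F0 i j && F1 i j) : nat)
   (fun j => (4 <= j) && (F0 i j && ~~ F1 i j) : nat).
have e1 := @sum_splitT _ (fun j => F1 i j : nat) (fun j => (j < 4) && (F0 i j && F1 i j) : nat)
   (fun j => (4 <= j) && (~~ F0 i j && F1 i j) : nat).
have e2 := @sum_splitT _ (fun j : 'I_10 => (4 <= j) : nat) (fun j => (4 <= j) && (F0 i j && ~~ F1 i j) : nat)
   (fun j => (4 <= j) && (~~ F0 i j && F1 i j) : nat).
have q : forall j : 'I_10, ~~ odd ((j < 4) + F0 i j + F1 i j).+1.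
  by move=> j; have := Hp i j; rewrite Hi add1n.
rewrite !cardS.
move: (H0 i) (H1 i); rewrite !cardS => h0 h1.
have {}e0 : _ := e0 ltac:(move=> j; have := q j; case: (ltnP j 4); case: (F0 i j); case: (F1 i j) => //).
have {}e1 : _ := e1 ltac:(move=> j; have := q j; case: (ltnP j 4); case: (F0 i j); case: (F1 i j) => //).
have {}e2 : _ := e2 ltac:(move=> j; have := q j; case: (ltnP j 4); case: (F0 i j); case: (F1 i j) => //).
have := sum_ge4.
move=> s6. rewrite s6 in e2. split; lia.
Qed.

Lemma rowNR (i : 'I_10) : 4 <= i ->
 [/\ #|[set j : 'I_10 | (j < 4) && (~~ F0 i j && F1 i j)]| = 2,
     #|[set j : 'I_10 | (j < 4) && (F0 i j && ~~ F1 i j)]| = 2,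
     #|[set j : 'I_10 | (4 <= j) && (F0 i j && F1 i j)]| = 2,
     #|[set j : 'I_10 | (4 <= j) && (~~ F0 i j && ~~ F1 i j)]| = 4 &
     #|[set j : 'I_10 | (j < 4) && (F0 i j && F1 i j)]| = 0].
Proof.
move=> Hi.
have q : forall j : 'I_10, ~~ odd ((j < 4) + F0 i j + F1 i j).
  by move=> j; have := Hp i j; rewrite ltnNge Hi.
have e0 := @sum_splitT _ (fun j => F0 i j : nat) (fun j => (j < 4) && (F0 i j && ~~ F1 i j) : nat)
   (fun j => (4 <= j) && (F0 i j && F1 i j) : nat).
have e1 := @sum_splitT _ (fun j => F1 i j : nat) (fun j => (j < 4) && (~~ F0 i j && F1 i j) : nat)
   (fun j => (4 <= j) && (F0 i j && F1 i j) : nat).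
have e2 := @sum_splitT _ (fun j : 'I_10 => (j < 4) : nat) (fun j => (j < 4) && (~~ F0 i j && F1 i j) : nat)
   (fun j => (j < 4) && (F0 i j && ~~ F1 i j) : nat).
have e3 := @sum_splitT _ (fun j : 'I_10 => (4 <= j) : nat) (fun j => (4 <= j) && (F0 i j && F1 i j) : nat)
   (fun j => (4 <= j) && (~~ F0 i j && ~~ F1 i j) : nat).
have e4 : \sum_(j : 'I_10) ((j < 4) && (F0 i j && F1 i j) : nat) = 0.
  by apply: big1 => j _; have := q j; case: (ltnP j 4); case: (F0 i j); case: (F1 i j).
rewrite !cardS.
move: (H0 i) (H1 i); rewrite !cardS => h0 h1.
have {}e0 : _ := e0 ltac:(move=> j; have := q j; case: (ltnP j 4); case: (F0 i j); case: (F1 i j) => //).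
have {}e1 : _ := e1 ltac:(move=> j; have := q j; case: (ltnP j 4); case: (F0 i j); case: (F1 i j) => //).
have {}e2 : _ := e2 ltac:(move=> j; have := q j; case: (ltnP j 4); case: (F0 i j); case: (F1 i j) => //).
have {}e3 : _ := e3 ltac:(move=> j; have := q j; case: (ltnP j 4); case: (F0 i j); case: (F1 i j) => //).
rewrite sum_ge4 in e3. rewrite sum_lt4 in e2. rewrite e4.
split; lia.
Qed.
End Rows.

Lemma sum_bij (T U : finType) (A : {set T}) (f : T -> U) (g : U -> nat) :
  {in A &, injective f} -> #|A| = #|U| -> \sum_(p in A) g (f p) = \sum_x g x.
Proof.
move=> inj cA; rewrite -big_imset //.
have -> : f @: A = setT.
  by apply/eqP; rewrite eqEcard subsetT cardsT card_in_imset // cA leqnn.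
by apply: eq_bigl => x; rewrite inE.
Qed.

Section Net.
Variables (P : finType) (lines : 'I_4 -> 'I_10 -> {set P}).
Hypothesis HN : is_net lines.

Lemma line_le1 t p : #|[set i | p \in lines t i]| <= 1.
Proof.
case: HN => _ _ _ Hd _.
apply/card_le1P => i; rewrite inE => hi j; rewrite !inE.
case: (eqVneq j i) => [->|ne]; first by rewrite hi.
apply/negbTE/negP => hj.
have := disjoint_setI0 (Hd t j i ne); move/setP/(_ p); by rewrite !inE hj hi.
Qed.

Lemma line_ex t p : exists i, p \in lines t i.
Proof.
case: HN => _ _ Hc _ _.
have := Hc p; rewrite cardS -(pair_bigA _ (fun t i => (p \in lines t i : nat))) /=.
case: (pickP (fun i => p \in lines t i)) => [i hi _|nex]; first by exists i.
have g1 : forall t', \sum_i (p \in lines t' i : nat) <= 1.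
  by move=> t'; rewrite -cardS line_le1.
have g0 : \sum_i (p \in lines t i : nat) = 0.
  apply: big1 => i _; by rewrite nex.
rewrite (bigD1 t) //= g0 add0n.
have s4 : \sum_(t' : 'I_4) 1 = 4 by rewrite big_const_ord.
rewrite (bigD1 t) //= in s4.
move=> e.
have le3 : \sum_(t' < 4 | t' != t) \sum_(j < 10) (p \in lines t' j : nat) <= 3.
  apply: (@leq_trans (\sum_(t' < 4 | t' != t) 1)); last by rewrite -ltnS -add1n s4.
  by apply: leq_sum => t' _; apply: g1.
by rewrite e in le3.
Qed.

Definition idx t p := odflt ord0 [pick i | p \in lines t i].

Lemma idxP t p : p \in lines t (idx t p).
Proof.
rewrite /idx; case: pickP => [i //|H].
have [i hi] := line_ex t p; by have := H i; rewrite hi.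
Qed.

Lemma idx_eq t p i : p \in lines t i -> idx t p = i.
Proof.
move=> hi; have := line_le1 t p.
move/card_le1P/(_ (idx t p)); rewrite inE idxP => /(_ isT i); rewrite !inE hi.
by move/esym/eqP.
Qed.

Lemma meet1 t t' i j p q : t != t' -> p \in lines t i -> q \in lines t i ->
  p \in lines t' j -> q \in lines t' j -> p = q.
Proof.
case: HN => _ _ _ _ Hm ne hp hq hp' hq'.
have /eqP/cards1P [x ex] := Hm t t' i j ne.
have : p \in lines t i :&: lines t' j by rewrite inE hp hp'.
have : q \in lines t i :&: lines t' j by rewrite inE hq hq'.
by rewrite ex !inE => /eqP -> /eqP ->.
Qed.

Lemma inj_idx t t' j : t != t' -> {in lines t j &, injective (idx t')}.
Proof.
move=> ne p q hp hq e; apply: (@meet1 t t' j (idx t' p) p q ne hp hq (idxP t' p)).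
by rewrite e idxP.
Qed.

Lemma sum_lines t' (h : P -> nat) :
  \sum_k \sum_(q in lines t' k) h q = \sum_q h q.
Proof.
under eq_bigr => k _ do rewrite big_mkcond /=.
rewrite exchange_big /=; apply: eq_bigr => q _.
have : \sum_k (q \in lines t' k : nat) = 1.
  rewrite -cardS; apply/eqP; rewrite eqn_leq line_le1 /=.
  have [i hi] := line_ex t' q; apply/card_gt0P; exists i; by rewrite inE.
rewrite (eq_bigr (fun k => (q \in lines t' k) * h q)); last by move=> k _; case: (q \in lines t' k); rewrite ?mul1n ?mul0n.
by move=> e; rewrite -big_distrl /= e mul1n.
Qed.
End Net.

Lemma cls_ne a b : a < 4 -> b < 4 -> a != b -> cls a != cls b.
Proof.
move=> ha hb ne; apply/eqP => /(congr1 val) /=; rewrite /cls !inordK //.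
by apply/eqP.
Qed.

Arguments idxP {P lines}.
Arguments inj_idx {P lines}.
Arguments sum_lines {P lines}.
Arguments meet1 {P lines}.
Section Iii.
Variables (F0 F1 : 'I_10 -> 'I_10 -> bool) (P : finType)
  (lines : 'I_4 -> 'I_10 -> {set P}) (s0 s1 : {perm 'I_10}).
Hypothesis HN : is_net lines.
Hypothesis Href : refines lines F0 F1 s0 s1.
Hypothesis hsq : forall t i, #|[set j | sq F0 F1 t i j]| = 4.

Local Notation cl p := (cell_of lines s0 s1 p).
Local Notation ix := (@idx P lines).

Lemma cell_inj : injective (fun p => cl p).
Proof.
move=> p q e.
have e1 := congr1 fst e; have e2 := congr1 snd e.
rewrite /= /row_of /col_of in e1 e2.
move/perm_inj in e1; move/perm_inj in e2.
have h0 : cls 0 != cls 1 by apply: cls_ne.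
apply: (meet1 HN (cls 0) (cls 1) (ix (cls 0) p) (ix (cls 1) p) p q h0).
- exact: (idxP HN).
- rewrite [ix (cls 0) p]e1; exact: (idxP HN).
- exact: (idxP HN).
- rewrite [ix (cls 1) p]e2; exact: (idxP HN).
Qed.

Lemma sum_cells (h : cell 10 -> nat) : \sum_p h (cl p) = \sum_c h c.
Proof.
rewrite -(@sum_bij P _ [set: P] (fun p => cl p) h).
- by apply: eq_bigl => x; rewrite inE.
- by move=> p q _ _; apply: cell_inj.
- case: HN => hP _ _ _ _; by rewrite cardsT hP card_prod card_ord.
Qed.

Lemma total40 t : \sum_(c : cell 10) (sq F0 F1 t c.1 c.2 : nat) = 40.
Proof.
rewrite -(pair_bigA _ (fun i j => sq F0 F1 t i j : nat)) /=.
rewrite (eq_bigr (fun _ => 4)); first by rewrite big_const_ord.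
by move=> i _; rewrite -cardS hsq.
Qed.

Lemma other4 t t' j : t' \in [:: 2; 3] -> cls t != cls t' ->
  \sum_(p in lines (cls t) j) (sq F0 F1 t' (cl p).1 (cl p).2 : nat) = 4.
Proof.
move=> ht' ne.
pose v k := [exists q, (q \in lines (cls t') k) && sq F0 F1 t' (cl q).1 (cl q).2].
have hv : forall k p, p \in lines (cls t') k -> sq F0 F1 t' (cl p).1 (cl p).2 = v k.
  move=> k p hp; apply/idP/existsP => [h|[q /andP[hq h]]]; first by exists p; rewrite hp h.
  have /= e := Href t' ht' k p q hp hq; by rewrite e.
rewrite (eq_bigr (fun p => (v (ix (cls t') p) : nat))); last by move=> p _; rewrite (hv _ _ (idxP HN _ _)).
rewrite (@sum_bij P _ (lines (cls t) j) (ix (cls t')) (fun k => (v k : nat))); first last.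
- case: HN => _ hl _ _ _; by rewrite hl card_ord.
- exact: (inj_idx HN).
have : \sum_k 10 * (v k : nat) = 40.
  rewrite -(total40 t') -(sum_cells (fun c => sq F0 F1 t' c.1 c.2 : nat)).
  rewrite -(sum_lines HN (cls t')); apply: eq_bigr => k _.
  rewrite (eq_bigr (fun _ => (v k : nat))); last by move=> p hp; rewrite (hv _ _ hp).
  case: HN => _ hl _ _ _; by rewrite sum_nat_const hl.
rewrite -big_distrr /=; lia.
Qed.

Lemma iii t t' j : t \in [:: 2; 3] -> t' \in [:: 2; 3] ->
  cls t != cls 0 -> cls t != cls 1 -> cls t != cls t' ->
  (forall c : cell 10, ~~ odd ((c.1 < 4) + (c.2 < 4) + sq F0 F1 t c.1 c.2 + sq F0 F1 t' c.1 c.2)) ->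
  relational_line lines F0 F1 s0 s1 t j ->
     [/\ #|[set p in lines (cls t) j | Q1 (cell_of lines s0 s1 p)]| = 1,
         #|[set p in lines (cls t) j | Q2 (cell_of lines s0 s1 p)]| = 3,
         #|[set p in lines (cls t) j | Q3 (cell_of lines s0 s1 p)]| = 3 &
         #|[set p in lines (cls t) j | Q4 (cell_of lines s0 s1 p)]| = 3].
Proof.
move=> ht ht' n0 n1 ntt hpar rel.
have cL : #|lines (cls t) j| = #|'I_10| by case: HN => _ hl _ _ _; rewrite hl card_ord.
have injr : {in lines (cls t) j &, injective (fun p => (cl p).1)}.
  move=> p q hp hq /= /perm_inj e; exact: (inj_idx HN _ _ _ n0 _ _ hp hq e).
have injc : {in lines (cls t) j &, injective (fun p => (cl p).2)}.
  move=> p q hp hq /= /perm_inj e; exact: (inj_idx HN _ _ _ n1 _ _ hp hq e).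
have r4 := @sum_bij P _ _ _ (fun i : 'I_10 => (i < 4 : nat)) injr cL.
have c4 := @sum_bij P _ _ _ (fun i : 'I_10 => (i < 4 : nat)) injc cL.
have r6 := @sum_bij P _ _ _ (fun i : 'I_10 => (4 <= i : nat)) injr cL.
rewrite sum_lt4 in r4; rewrite sum_lt4 in c4; rewrite sum_ge4 in r6.
have h4 := other4 t t' j ht' ntt.
have er := @sum_split P (lines (cls t) j) (fun p => ((cl p).1 < 4 : nat)) (fun p => Q1 (cl p) : nat) (fun p => Q2 (cl p) : nat).
have ec := @sum_split P (lines (cls t) j) (fun p => ((cl p).2 < 4 : nat)) (fun p => Q1 (cl p) : nat) (fun p => Q3 (cl p) : nat).
have en := @sum_split P (lines (cls t) j) (fun p => (4 <= (cl p).1 : nat)) (fun p => Q3 (cl p) : nat) (fun p => Q4 (cl p) : nat).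
have eh := @sum_split P (lines (cls t) j) (fun p => (sq F0 F1 t' (cl p).1 (cl p).2 : nat)) (fun p => Q1 (cl p) : nat) (fun p => Q4 (cl p) : nat).
have {}er : _ := er ltac:(by move=> p _; rewrite /Q1 /Q2; case: (ltnP (cl p).1 4); case: (ltnP (cl p).2 4)).
have {}ec : _ := ec ltac:(by move=> p _; rewrite /Q1 /Q3; case: (ltnP (cl p).1 4); case: (ltnP (cl p).2 4)).
have {}en : _ := en ltac:(by move=> p _; rewrite /Q3 /Q4; case: (ltnP (cl p).1 4); case: (ltnP (cl p).2 4)).
have {}eh : _ := eh ltac:(by move=> p hp; have := hpar (cl p); rewrite (rel p hp) /Q1 /Q4;
   case: (ltnP (cl p).1 4); case: (ltnP (cl p).2 4); case: (sq F0 F1 t' _ _)).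
rewrite !cardSin.
split; lia.
Qed.
End Iii.

Lemma card1_eq (T : finType) (S : {set T}) x y : #|S| = 1 -> x \in S -> y \in S -> x = y.
Proof. by move/eqP/cards1P => [z ->]; rewrite !inE => /eqP -> /eqP ->. Qed.

Theorem mainTheorem4 (F0 F1 : 'I_10 -> 'I_10 -> bool) (P : finType)
  (lines : 'I_4 -> 'I_10 -> {set P}) (s0 s1 : {perm 'I_10}) :
  template4 4 4 4 4 F0 F1 ->
  is_net lines ->
  refines lines F0 F1 s0 s1 ->
  let ty := ctype 4 4 F0 F1 in
  (* (i) *)
  (#|[set c : cell 10 | ty c == (true, true, true, true)]| = 4 /\
   forall c c' : cell 10, ty c = (true, true, true, true) ->
     ty c' = (true, true, true, true) -> c != c' ->
     c.1 != c'.1 /\ c.2 != c'.2) /\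
  (* (ii) *)
  (forall i : 'I_10, i < 4 ->
     #|[set j : 'I_10 | (4 <= j) && (F0 i j && ~~ F1 i j)]| = 3 /\
     #|[set j : 'I_10 | (4 <= j) && (~~ F0 i j && F1 i j)]| = 3) /\
  (forall j : 'I_10, j < 4 ->
     #|[set i : 'I_10 | (4 <= i) && (F0 i j && ~~ F1 i j)]| = 3 /\
     #|[set i : 'I_10 | (4 <= i) && (~~ F0 i j && F1 i j)]| = 3) /\
  (* (iii) *)
  (forall t, t \in [:: 2; 3] -> forall j : 'I_10, relational_line lines F0 F1 s0 s1 t j ->
     [/\ #|[set p in lines (cls t) j | Q1 (cell_of lines s0 s1 p)]| = 1,
         #|[set p in lines (cls t) j | Q2 (cell_of lines s0 s1 p)]| = 3,
         #|[set p in lines (cls t) j | Q3 (cell_of lines s0 s1 p)]| = 3 &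
         #|[set p in lines (cls t) j | Q4 (cell_of lines s0 s1 p)]| = 3]) /\
  (* (iv) *)
  (forall j : 'I_10, 4 <= j ->
     #|[set i : 'I_10 | (i < 4) && (~~ F0 i j && F1 i j)]| = 2 /\
     #|[set i : 'I_10 | (i < 4) && (F0 i j && ~~ F1 i j)]| = 2) /\
  (forall i : 'I_10, 4 <= i ->
     #|[set j : 'I_10 | (j < 4) && (~~ F0 i j && F1 i j)]| = 2 /\
     #|[set j : 'I_10 | (j < 4) && (F0 i j && ~~ F1 i j)]| = 2) /\
  (forall i : 'I_10, 4 <= i ->
     #|[set j : 'I_10 | (4 <= j) && (F0 i j && F1 i j)]| = 2 /\
     #|[set j : 'I_10 | (4 <= j) && (~~ F0 i j && ~~ F1 i j)]| = 4) /\
  (forall j : 'I_10, 4 <= j ->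
     #|[set i : 'I_10 | (4 <= i) && (F0 i j && F1 i j)]| = 2 /\
     #|[set i : 'I_10 | (4 <= i) && (~~ F0 i j && ~~ F1 i j)]| = 4).
Proof.
move=> [_ [[r0 c0] [[r1 c1] [_ Hw]]]] HN Href ty.
have Hp : forall i j : 'I_10, ~~ odd ((i < 4) + (j < 4) + F0 i j + F1 i j).
  by move=> i j; have := Hw (i, j); rewrite /weight /ctype /= => ->.
have Hpt : forall i j : 'I_10, ~~ odd ((i < 4) + (j < 4) + F0 j i + F1 j i).
  by move=> i j; rewrite (addnC (i < 4)); apply: Hp.
have R := rowR F0 F1 r0 r1 Hp.
have NR := rowNR F0 F1 r0 r1 Hp.
have C := @rowR (fun i j => F0 j i) (fun i j => F1 j i) c0 c1 Hpt.
have NC := @rowNR (fun i j => F0 j i) (fun i j => F1 j i) c0 c1 Hpt.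
have tyE : forall c : cell 10, (ty c == (true, true, true, true)) =
   (c.1 < 4) && ((c.2 < 4) && (F0 c.1 c.2 && F1 c.1 c.2)).
  by move=> c; rewrite /ty /ctype; case: (c.1 < 4); case: (c.2 < 4); case: (F0 c.1 c.2); case: (F1 c.1 c.2).
split; [split|split; [|split; [|split; [|split; [|split; [|split]]]]]].
- rewrite cardS (eq_bigr (fun c : cell 10 => ((c.1 < 4) && ((c.2 < 4) && (F0 c.1 c.2 && F1 c.1 c.2)) : nat)));
    last by move=> c _; rewrite tyE.
  rewrite -(pair_bigA _ (fun i j : 'I_10 => ((i < 4) && ((j < 4) && (F0 i j && F1 i j)) : nat))) /=.
  rewrite (eq_bigr (fun i : 'I_10 => (i < 4 : nat))) ?sum_lt4 // => i _.
  case: (ltnP i 4) => hi /=.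
  + by case: (R i hi) => h _ _; rewrite -[RHS]h cardS.
  + by apply: big1.
- move=> [i j] [i' j'] e e' ne.
  have := e; rewrite /ty /ctype /= => -[hi hj f0 f1].
  have := e'; rewrite /ty /ctype /= => -[hi' hj' f0' f1'].
  split.
  + apply/negP => /eqP /= ei; subst i'.
    case: (R i hi) => h _ _.
    have ejj : j = j' by apply: (@card1_eq _ _ j j' h); rewrite !inE ?hj ?hj' ?f0 ?f1 ?f0' ?f1'.
    by move: ne; rewrite ejj eqxx.
  + apply/negP => /eqP /= ej; subst j'.
    case: (C j hj) => h _ _.
    have eii : i = i' by apply: (@card1_eq _ _ i i' h); rewrite !inE ?hi ?hi' ?f0 ?f1 ?f0' ?f1'.
    by move: ne; rewrite eii eqxx.
- by move=> i hi; case: (R i hi).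
- by move=> j hj; case: (C j hj).
- move=> t ht j rel.
  have hsq : forall t i, #|[set j | sq F0 F1 t i j]| = 4.
    by move=> t' i; rewrite /sq; case: ifP.
  move: ht; rewrite !inE => /orP [] /eqP ht; subst t.
  + apply: (@iii F0 F1 P lines s0 s1 HN Href hsq 2 3 j) => //; try by apply: cls_ne.
  + apply: (@iii F0 F1 P lines s0 s1 HN Href hsq 3 2 j) => //; try by apply: cls_ne.
    by move=> c; rewrite /sq /= -addnA (addnC (F1 _ _)) addnA; apply: (Hp c.1 c.2).
- by move=> j hj; case: (NC j hj).
- by move=> i hi; case: (NR i hi).
- by move=> i hi; case: (NR i hi).
- by move=> j hj; case: (NC j hj).
Qed.
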